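(* Let $G=(\mathbb Z/a_1\mathbb Z)\times\dots\times(\mathbb Z/a_r\mathbb Z)$ be a finite Abelian group and let $f,g:G\to\mathbb C$. Suppose that $\widehat f$ is nowhere zero or $\widehat g$ is nowhere zero, and that $M_n(f;x_1,\dots,x_{n-1})=M_n(g;x_1,\dots,x_{n-1})$ for all $n\in\{1,2,3\}$ and all $x_1,\dots,x_{n-1}\in G$. Then there exists $y\in G$ with $g(x)=f(x+y)$ for all $x\in G$.
   Context: Elements of $G$ are tuples $x=(x[1],\dots,x[r])$ with componentwise addition modulo $a_k$. Define $\chi(x,y)=\exp\left(2\pi i\sum_{k=1}^r \frac{x[k]y[k]}{a_k}\right)$. The discrete Fourier transform of $f$ is $\widehat f(x)=\sum_{y\in G}f(y)\overline{\chi(x,y)}$. The $n$-th autocorrelation is $M_n(f;x_1,\dots,x_{n-1})=\sum_{y\in G}f(y)f(y+x_1)\cdots f(y+x_{n-1})$. *)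

(* Defs.v *)
From mathcomp Require Import all_boot all_algebra.
From mathcomp Require Import reals trigo.
From mathcomp Require Import complex.
Import GRing.Theory Num.Theory.

Set Implicit Arguments.
Unset Strict Implicit.
Unset Printing Implicit Defensive.

Local Open Scope ring_scope.
Local Open Scope complex_scope.

Lemma ord_pos (n : nat) (i : 'I_n) : (0 < n)%N.
Proof. exact: leq_ltn_trans (leq0n i) (ltn_ord i). Qed.

Definition ord_add (n : nat) (i j : 'I_n) : 'I_n :=
  Ordinal (ltn_pmod (i + j)%N (ord_pos i)).

Definition grp (r : nat) (a : 'I_r -> nat) : finType :=
  {dffun forall k : 'I_r, 'I_(a k)}.

Definition gadd (r : nat) (a : 'I_r -> nat) (x y : grp a) : grp a :=
  [ffun k => ord_add (x k) (y k)].

Definition expi (R : realType) (t : R) : R[i] := cos t +i* sin t.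

Definition chi (R : realType) (r : nat) (a : 'I_r -> nat) (x y : grp a) : R[i] :=
  expi (2 * pi * \sum_(k < r) ((x k * y k)%N%:R / (a k)%:R)).

Definition dft (R : realType) (r : nat) (a : 'I_r -> nat) (f : grp a -> R[i])
  (x : grp a) : R[i] :=
  \sum_(y : grp a) f y * (chi R x y)^*.

Definition autocorr (R : realType) (r : nat) (a : 'I_r -> nat) (f : grp a -> R[i])
  (n : nat) (xs : n.-1.-tuple (grp a)) : R[i] :=
  \sum_(y : grp a) f y * \prod_(z <- xs) f (gadd y z).

(* Main.v *)
Require Import Defs.
From mathcomp Require Import all_boot all_order all_algebra.
From mathcomp Require Import reals trigo.
From mathcomp Require Import complex.
From mathcomp Require Import ring.
Import Order.TTheory GRing.Theory Num.Theory.
Local Open Scope ring_scope.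
Local Open Scope complex_scope.
Set Implicit Arguments.
Unset Strict Implicit.
Unset Printing Implicit Defensive.

Section E.
Variable R : realType.
Lemma expi_add (s t : R) : expi (s + t) = expi s * expi t.
Proof. by rewrite /expi cosD sinD /=; congr (_ +i* _); rewrite addrC. Qed.
Lemma expi0 : expi (0:R) = 1.
Proof. by rewrite /expi cos0 sin0. Qed.
Lemma expi_2pin (n : nat) : expi (2 * pi * n%:R : R) = 1.
Proof.
elim: n => [|n IH]; first by rewrite mulr0 expi0.
rewrite -[n.+1]addn1 natrD mulrDr expi_add IH mul1r mulr1 /expi.
by rewrite mulr_natl cos2pi sin2pi.
Qed.
Lemma expiN_mul (t : R) : expi (- t) * expi t = 1.
Proof. by rewrite -expi_add addNr expi0. Qed.
Lemma expi_neq1 (t : R) : 0 < t < 1 -> expi (- (2 * pi * t)) != 1.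
Proof.
move=> /andP[t0 t1]; apply/negP => /eqP/(congr1 (@complex.Re R)) /=.
rewrite cosN (_ : 2 * pi * t = (pi * t) *+ 2); last by rewrite mulr_natl mulrnAl.
rewrite cos_mulr2n => /eqP; rewrite subr_eq (_ : 1 + 1 = 1 *+ 2) // eqrMn2r /=.
move=> /eqP c2.
have : sin (pi * t) ^+ 2 = 0 by rewrite sin2cos2 c2 subrr.
move/eqP; rewrite sqrf_eq0 => /eqP s0.
have : 0 < sin (pi * t).
  apply: sin_gt0_pi; rewrite mulr_gt0 ?pi_gt0 //=.
  by rewrite -[X in _ < X]mulr1 ltr_pM2l ?pi_gt0.
by rewrite s0 ltxx.
Qed.
End E.
Section G.
Variables (r : nat) (a : 'I_r -> nat).
Hypothesis ha : forall k, (0 < a k)%N.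

Definition gzero : grp a := [ffun k => Ordinal (ha k)].
Definition gneg (x : grp a) : grp a := [ffun k => Ordinal (ltn_pmod (a k - x k) (ha k))].

Lemma gaddE (x y : grp a) k : (gadd x y k : nat) = ((x k + y k) %% a k)%N.
Proof. by rewrite ffunE. Qed.
Lemma gzeroE k : (gzero k : nat) = 0%N.
Proof. by rewrite ffunE. Qed.
Lemma gnegE (x : grp a) k : (gneg x k : nat) = ((a k - x k) %% a k)%N.
Proof. by rewrite ffunE. Qed.

Lemma geqP (x y : grp a) : (forall k, (x k : nat) = y k) -> x = y.
Proof. by move=> H; apply/ffunP => k; apply/val_inj/H. Qed.

Lemma gaddC (x y : grp a) : gadd x y = gadd y x.
Proof. by apply: geqP => k; rewrite !gaddE addnC. Qed.
Lemma gaddA (x y z : grp a) : gadd x (gadd y z) = gadd (gadd x y) z.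
Proof. by apply: geqP => k; rewrite !gaddE modnDml modnDmr addnA. Qed.
Lemma gadd0 (x : grp a) : gadd x gzero = x.
Proof. by apply: geqP => k; rewrite gaddE gzeroE addn0 modn_small. Qed.
Lemma gaddN (x : grp a) : gadd x (gneg x) = gzero.
Proof.
apply: geqP => k; rewrite gaddE gnegE gzeroE modnDmr subnKC ?modnn //.
exact: ltnW.
Qed.
Lemma gaddK (c : grp a) : cancel (fun x => gadd x c) (fun x => gadd x (gneg c)).
Proof. by move=> x /=; rewrite -gaddA gaddN gadd0. Qed.
Lemma gaddNK (c : grp a) : cancel (fun x => gadd x (gneg c)) (fun x => gadd x c).
Proof. by move=> x /=; rewrite -gaddA (gaddC (gneg c)) gaddN gadd0. Qed.
Lemma gadd_inj (c : grp a) : injective (fun x => gadd x c).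
Proof. exact: can_inj (gaddK c). Qed.
Lemma gnegK : involutive (@gneg).
Proof.
move=> x; apply: (@gadd_inj (gneg x)) => /=.
by rewrite gaddC gaddN gaddN.
Qed.
Lemma gneg_inj : injective (@gneg).
Proof. exact: inv_inj gnegK. Qed.
Lemma gnegD (x y : grp a) : gneg (gadd x y) = gadd (gneg x) (gneg y).
Proof.
apply: (@gadd_inj (gadd x y)) => /=; rewrite (gaddC (gneg _)) gaddN.
rewrite [gadd x y]gaddC gaddA -[gadd (gadd _ (gneg y)) y]gaddA (gaddC (gneg y) y).
by rewrite gaddN gadd0 gaddC gaddN.
Qed.
Lemma gneg0 : gneg gzero = gzero.
Proof. by rewrite -[LHS]gadd0 gaddC gaddN. Qed.
End G.
Section C.
Variable R : realType.
Variables (r : nat) (a : 'I_r -> nat).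
Hypothesis ha : forall k, (0 < a k)%N.

Definition ph (u x : grp a) : R := \sum_(k < r) ((u k * x k)%N%:R / (a k)%:R).
Definition ee (u x : grp a) : R[i] := expi (- (2 * pi * ph u x)).

Lemma chi_conj (u x : grp a) : (chi R u x)^* = ee u x.
Proof. by rewrite /chi /ee /expi /= cosN sinN. Qed.

Lemma ph_sym u x : ph u x = ph x u.
Proof. by apply: eq_bigr => k _; rewrite mulnC. Qed.

Lemma ph_add u x y : exists m : nat, ph u (gadd x y) = ph u x + ph u y - m%:R.
Proof.
exists (\sum_(k < r) (u k * ((x k + y k) %/ a k)))%N.
rewrite /ph -big_split /= natr_sum -sumrB; apply: eq_bigr => k _.
rewrite gaddE -mulrDl.
have ak : (a k)%:R != 0 :> R by rewrite pnatr_eq0 -lt0n.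
apply: (mulIf ak); rewrite mulrBl divfK // -natrD -mulnDr -!natrM.
rewrite {2}(divn_eq (x k + y k) (a k)) mulnDr natrD.
by rewrite divfK // mulnA [X in X - _]addrC addrK.
Qed.

Lemma ee_addr u x y : ee u (gadd x y) = ee u x * ee u y.
Proof.
have [m hm] := ph_add u x y.
rewrite /ee hm -expi_add; set A := ph u x; set B := ph u y.
rewrite (_ : - (2 * pi * (A + B - m%:R)) = - (2 * pi * A) + - (2 * pi * B) + 2 * pi * m%:R).
  by rewrite [LHS]expi_add expi_2pin mulr1.
by rewrite !mulrDr mulrN opprD opprK !opprD.
Qed.

Lemma ee_sym u x : ee u x = ee x u.
Proof. by rewrite /ee ph_sym. Qed.

Lemma ee_addl u v x : ee (gadd u v) x = ee u x * ee v x.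
Proof. by rewrite ee_sym ee_addr ![ee x _]ee_sym. Qed.

Lemma ee0l x : ee (gzero ha) x = 1.
Proof.
rewrite /ee /ph big1 ?mulr0 ?oppr0 ?expi0 // => k _.
by rewrite gzeroE mul0n mul0r.
Qed.
Lemma ee0r x : ee x (gzero ha) = 1.
Proof. by rewrite ee_sym ee0l. Qed.

Lemma eeN u x : ee u x * ee u (gneg ha x) = 1.
Proof. by rewrite -ee_addr gaddN ee0r. Qed.
Lemma sum_ee (z : grp a) : z != gzero ha -> \sum_u ee u z = 0.
Proof.
move=> nz.
have [k hk] : exists k, (z k : nat) != 0%N.
  apply/existsP; apply: contraR nz => /existsPn H; apply/eqP/geqP => j.
  by rewrite gzeroE; apply/eqP; move: (H j); rewrite negbK.
have zk : (z k < a k)%N := ltn_ord _.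
pose d : grp a := [ffun j => Ordinal (ltn_pmod (j == k) (ha j))].
have phd : ph d z = (z k)%:R / (a k)%:R :> R.
  rewrite /ph (bigD1 k) //= big1 ?addr0.
    by rewrite ffunE /= eqxx modn_small ?mul1n // (leq_ltn_trans _ zk) // lt0n.
  by move=> j /negbTE jk; rewrite ffunE /= jk mod0n mul0n mul0r.
have ne1 : ee d z != 1.
  rewrite /ee phd; apply: expi_neq1.
  have ak : (0 < (a k)%:R :> R) by rewrite ltr0n.
  rewrite divr_gt0 ?ltr0n ?lt0n //=; last by rewrite -lt0n.
  by rewrite ltr_pdivrMr // mul1r ltr_nat.
have := reindex_inj (@gadd_inj r a ha d) (F := fun u => ee u z) (P := xpredT) (op := +%R) (x := 0).
under [in X in _ = X -> _]eq_bigr => u _ do rewrite ee_addl.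
rewrite -mulr_suml => /eqP; rewrite -subr_eq0 -{1}[\sum_u _]mulr1 -mulrBr mulf_eq0.
by rewrite subr_eq0 [1 == _]eq_sym (negbTE ne1) orbF => /eqP.
Qed.
Local Notation G := (grp a).
Local Notation N := (#|G|%:R : R[i]).
Definition ft (f : G -> R[i]) u := \sum_x f x * ee u x.
Definition M3 (f : G -> R[i]) x1 x2 := \sum_c f c * (f (gadd c x1) * f (gadd c x2)).

Lemma N_neq0 : N != 0.
Proof. by rewrite pnatr_eq0 -lt0n; apply/card_gt0P; exists (gzero ha). Qed.

Lemma sum_ee_if (u z : G) : \sum_x ee u (gadd x z) = if u == gzero ha then N else 0.
Proof.
case: eqP => [->|/eqP nu].
  by under eq_bigr => x _ do rewrite ee0l; rewrite sumr_const.
under eq_bigr => x _ do rewrite ee_addr.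
by rewrite -mulr_suml; under eq_bigr => x _ do rewrite ee_sym; rewrite sum_ee // mul0r.
Qed.

Lemma inversion (f : G -> R[i]) x : \sum_u ft f u * ee u (gneg ha x) = N * f x.
Proof.
under eq_bigr => u _ do rewrite /ft mulr_suml.
rewrite exchange_big /= (bigD1 x) //= [X in _ + X]big1 ?addr0.
  under eq_bigr => u _ do rewrite -mulrA -ee_addr gaddN ee0r.
  by rewrite -mulr_sumr sumr_const mulrC.
move=> y yx.
under eq_bigr => u _ do rewrite -mulrA -ee_addr.
rewrite -mulr_sumr sum_ee ?mulr0 //; apply: contra yx => /eqP h.
by apply/eqP; rewrite -(gaddNK ha x y) /= h gaddC gadd0.
Qed.

Lemma ft_inj (f g : G -> R[i]) : (forall u, ft f u = ft g u) -> forall x, f x = g x.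
Proof.
move=> H x; apply: (mulfI N_neq0); rewrite -!inversion.
by apply: eq_bigr => u _; rewrite H.
Qed.

Lemma ft_shift (f : G -> R[i]) c u : ft f u = ee u c * \sum_x f (gadd x c) * ee u x.
Proof.
rewrite /ft (reindex_inj (@gadd_inj r a ha c)) mulr_sumr; apply: eq_bigr => x _.
by rewrite ee_addr; ring.
Qed.

Lemma ft_transl (f : G -> R[i]) y u : ft (fun x => f (gadd x y)) u = ft f u * ee u (gneg ha y).
Proof.
by rewrite (ft_shift f y) [ee u y * _]mulrC -mulrA eeN mulr1.
Qed.
Lemma triple (f : G -> R[i]) v w :
  ft f v * ft f w * ft f (gneg ha (gadd v w)) =
  \sum_x1 \sum_x2 ee v x1 * ee w x2 * M3 f x1 x2.
Proof.
set n := gneg ha (gadd v w).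
rewrite {3}/ft mulr_sumr.
transitivity (\sum_c \sum_x1 \sum_x2
   (f c * f (gadd x1 c) * f (gadd x2 c) * ee v x1 * ee w x2)).
  apply: eq_bigr => c _; rewrite (ft_shift f c v) (ft_shift f c w).
  have hc : ee v c * ee w c * ee n c = 1 by rewrite -!ee_addl /n gaddN ee0l.
  transitivity ((ee v c * ee w c * ee n c) * ((\sum_x f (gadd x c) * ee v x) *
     (\sum_x f (gadd x c) * ee w x) * f c)); first by ring.
  rewrite hc mul1r !mulr_suml; apply: eq_bigr => x1 _.
  rewrite mulr_sumr mulr_suml; apply: eq_bigr => x2 _; ring.
rewrite exchange_big; apply: eq_bigr => x1 _.
rewrite exchange_big; apply: eq_bigr => x2 _.
rewrite /M3 mulr_sumr; apply: eq_bigr => c _.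
rewrite (gaddC c x1) (gaddC c x2); ring.
Qed.
Lemma ft0 (f : G -> R[i]) : ft f (gzero ha) = \sum_x f x.
Proof. by apply: eq_bigr => x _; rewrite ee0l mulr1. Qed.

Lemma main (f g : G -> R[i]) : (forall u, ft f u != 0) ->
  \sum_x f x = \sum_x g x -> (forall x1 x2, M3 f x1 x2 = M3 g x1 x2) ->
  exists y, forall x, g x = f (gadd x y).
Proof.
move=> nf h1 h3.
have T v w : ft g v * ft g w * ft g (gneg ha (gadd v w)) =
             ft f v * ft f w * ft f (gneg ha (gadd v w)).
  by rewrite !triple; apply: eq_bigr => x1 _; apply: eq_bigr => x2 _; rewrite h3.
have h0 : ft g (gzero ha) = ft f (gzero ha) by rewrite !ft0.
have T0 v : ft g v * ft g (gneg ha v) = ft f v * ft f (gneg ha v).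
  have := T v (gzero ha); rewrite gadd0 h0 ![_ * ft f (gzero ha) * _]mulrAC.
  by move/mulIf; apply; exact: nf.
have ng v : ft g v != 0.
  apply/negP => /eqP g0; have := T0 v; rewrite g0 mul0r => /esym/eqP.
  by rewrite mulf_eq0 !(negbTE (nf _)).
pose phi v := ft g v / ft f v.
have phi0 : phi (gzero ha) = 1 by rewrite /phi h0 divff.
have phiN v : phi v * phi (gneg ha v) = 1.
  by rewrite /phi mulrACA T0; field; rewrite !nf.
have phiT v w : phi v * phi w * phi (gneg ha (gadd v w)) = 1.
  rewrite /phi (_ : forall a b c d e h : R[i], a / b * (c / d) * (e / h) = (a * c * e) / (b * d * h)); last by move=> *; rewrite !invfM; ring.
  by rewrite T divff // !mulf_neq0.
have phiM v w : phi (gadd v w) = phi v * phi w.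
  have hn : phi (gneg ha (gadd v w)) != 0.
    by apply/negP => /eqP z; move: (phiN (gadd v w)); rewrite z mulr0 => /eqP; rewrite eq_sym oner_eq0.
  by apply: (mulIf hn); rewrite phiT phiN.
pose S z := \sum_u phi u * ee u (gneg ha z).
have [z Sz] : exists z, S z != 0.
  apply/existsP; apply: contraT; rewrite negb_exists => /forallP H.
  have : \sum_z S z = 0 by rewrite big1 // => z _; apply/eqP; rewrite -[_ == 0]negbK H.
  rewrite /S exchange_big /=.
  under eq_bigr => u _ do rewrite -mulr_sumr.
  rewrite (bigD1 (gzero ha)) //= [X in _ + X]big1 ?addr0.
    rewrite phi0 mul1r; under eq_bigr => x _ do rewrite ee0l.
    by rewrite sumr_const => /eqP; rewrite (negbTE N_neq0).
  move=> u nu; rewrite (reindex_inj (@gneg_inj r a ha)) /=.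
  under eq_bigr => x _ do rewrite gnegK ee_sym.
  by rewrite sum_ee ?mulr0.
have hv v : phi v = ee v z.
  have : S z = phi v * ee v (gneg ha z) * S z.
    rewrite {1}/S (reindex_inj (@gadd_inj r a ha v)) /S mulr_sumr.
    by apply: eq_bigr => u _ /=; rewrite phiM ee_addl; ring.
  move/eqP; rewrite -subr_eq0 -{1}[S z]mul1r -mulrBl mulf_eq0 (negbTE Sz) orbF subr_eq0 => /eqP h.
  by rewrite -[phi v]mulr1 -(eeN v z) mulrCA -h mulr1.
exists (gneg ha z) => x.
apply: (@ft_inj g (fun x => f (gadd x (gneg ha z)))) => u.
by rewrite ft_transl gnegK -hv /phi mulrC divfK.
Qed.
End C.

Theorem theorem1 (R : realType) (r : nat) (a : 'I_r -> nat)
  (ha : forall k : 'I_r, (0 < a k)%N)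
  (f g : grp a -> R[i]) :
  ((forall x : grp a, dft f x != 0) \/ (forall x : grp a, dft g x != 0)) ->
  (forall n : nat, (1 <= n <= 3)%N ->
     forall xs : n.-1.-tuple (grp a), autocorr f xs = autocorr g xs) ->
  exists y : grp a, forall x : grp a, g x = f (gadd x y).
Proof.
move=> hnz hM.
have h1 : \sum_x f x = \sum_x g x.
  move: (hM 1%N isT [tuple]); rewrite /autocorr /=.
  by under eq_bigr => y _ do rewrite big_nil mulr1; under [in X in _ = X -> _]eq_bigr => y _ do rewrite big_nil mulr1.
have h3 : forall x1 x2, M3 f x1 x2 = M3 g x1 x2.
  move=> x1 x2; move: (hM 3%N isT [tuple x1; x2]); rewrite /autocorr /M3 /=.
  by under eq_bigr => y _ do rewrite !big_cons big_nil mulr1; under [in X in _ = X -> _]eq_bigr => y _ do rewrite !big_cons big_nil mulr1.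
have dftE (h : grp a -> R[i]) u : dft h u = ft h u.
  rewrite /dft /ft; by apply: eq_bigr => y _; congr (_ * _); exact: chi_conj.
case: hnz => H.
  apply: main => // u; rewrite -dftE; exact: H.
have [y hy] : exists y, forall x, f x = g (gadd x y).
  apply: main; [exact: ha | by move=> u; rewrite -dftE; exact: H | by rewrite h1 | by move=> x1 x2; rewrite h3].
exists (gneg ha y) => x; rewrite hy.
by have := gaddNK ha y x; rewrite /= => ->.
Qed.
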